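(* Let $\boldsymbol{\theta}$ be a parameter with real-valued treatment effect $\theta=\theta(\boldsymbol{\theta})$, $\delta\in\mathbb{R}$, $c\in(0,1)$, $\mathcal{E}=\{\theta>\delta\}$, $\bar{\mathcal{E}}=\{\theta\le\delta\}$. Let $\pi_{\mathrm{a}}$ and $\pi_{\mathrm{d}}$ be priors on $\boldsymbol{\theta}$ each giving positive probability to $\mathcal{E}$ and $\bar{\mathcal{E}}$, with $\pi_{\mathrm{a}}(\boldsymbol{\theta}\mid\mathcal{E})=\pi_{\mathrm{d}}(\boldsymbol{\theta}\mid\mathcal{E})$ and $\pi_{\mathrm{a}}(\boldsymbol{\theta}\mid\bar{\mathcal{E}})=\pi_{\mathrm{d}}(\boldsymbol{\theta}\mid\bar{\mathcal{E}})$, and let data $\mathcal{D}$ have likelihood $f(\mathcal{D}\mid\boldsymbol{\theta})$. Let $\mathcal{S}(\mathcal{D};c)=\mathbb{I}\{\Pr_{\mathrm{a}}(\mathcal{E}\mid\mathcal{D})>c\}$ and $\mathrm{PID}(c)=\Pr_{\mathrm{d}}(\bar{\mathcal{E}}\mid\mathcal{S}=1)$ under the joint model $\boldsymbol{\theta}\sim\pi_{\mathrm{d}}$, $\mathcal{D}\mid\boldsymbol{\theta}\sim f$ (assuming $\Pr_{\mathrm{d}}(\mathcal{S}=1)>0$). If $R=\frac{\Pr_{\mathrm{d}}(\mathcal{E})/\Pr_{\mathrm{d}}(\bar{\mathcal{E}})}{\Pr_{\mathrm{a}}(\mathcal{E})/\Pr_{\mathrm{a}}(\bar{\mathcal{E}})}=1$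 (which holds in particular when $\pi_{\mathrm{a}}=\pi_{\mathrm{d}}$), then $\mathrm{PID}(c)\le1-c$.
   Context: $\Pr_{\mathrm{a}}(\cdot\mid\mathcal{D})$ is the posterior under the analysis prior $\pi_{\mathrm{a}}$; $\Pr_{\mathrm{a}},\Pr_{\mathrm{d}}$ denote prior probabilities. *)

(* Defs.v *)
From HB Require Import structures.
From mathcomp Require Import all_boot all_order all_algebra.
From mathcomp Require Import all_classical all_reals all_analysis.
Set Implicit Arguments. Unset Strict Implicit. Unset Printing Implicit Defensive.
Import Order.TTheory GRing.Theory Num.Theory.
Import numFieldNormedType.Exports.
Local Open Scope classical_set_scope.
Local Open Scope ring_scope.

Section Defs.
Context (R : realType) (d1 d2 : measure_display)
        (T : measurableType d1) (X : measurableType d2).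

Definition cond_prob (P : probability T R) (A B : set T) : R :=
  fine (P (A `&` B)) / fine (P B).

Definition posterior (P : probability T R) (f : T -> X -> R) (A : set T) (x : X) : R :=
  fine (\int[P]_(t in A) (f t x)%:E) / fine (\int[P]_t (f t x)%:E).

Definition joint_prob (P : probability T R) (mu : {measure set X -> \bar R})
  (f : T -> X -> R) (A : set T) (B : set X) : \bar R :=
  (\int[P]_(t in A) (\int[mu]_(x in B) (f t x)%:E))%E.

Definition success_set (Pa : probability T R) (f : T -> X -> R) (E : set T) (c : R) : set X :=
  [set x | c < posterior Pa f E x].

Definition PID (Pa Pd : probability T R) (mu : {measure set X -> \bar R})
  (f : T -> X -> R) (E Ebar : set T) (c : R) : R :=
  fine (joint_prob Pd mu f Ebar (success_set Pa f E c)) /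
  fine (joint_prob Pd mu f setT (success_set Pa f E c)).

End Defs.

(* Main.v *)
Require Import Defs.
From HB Require Import structures.
From mathcomp Require Import all_boot all_order all_algebra.
From mathcomp Require Import all_classical all_reals all_analysis.
From mathcomp Require Import measurable_realfun.
From mathcomp Require Import ring lra.
Import Order.TTheory GRing.Theory Num.Theory.
Import numFieldNormedType.Exports.
Local Open Scope classical_set_scope.
Local Open Scope ring_scope.

Section aux.
Context (R : realType) (d1 d2 : measure_display)
  (T : measurableType d1) (X : measurableType d2) (f : T -> X -> R).
Hypothesis mf : measurable_fun setT (fun p : T * X => f p.1 p.2).
Hypothesis f0 : forall t x, 0 <= f t x.

Definition Fp (A : set T) (B : set X) (p : T * X) : \bar R :=
  ((fun q : T * X => (f q.1 q.2)%:E) \_ (A `*` B)) p.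

Lemma mFp A B : measurable A -> measurable B -> measurable_fun setT (Fp A B).
Proof.
move=> mA mB; apply/(measurable_restrictT _ (measurableX mA mB)).
by apply: measurable_funTS; exact/measurable_EFinP.
Qed.

Lemma Fp0 A B p : (0 <= Fp A B p)%E.
Proof. by rewrite /Fp /patch; case: ifP => // _; rewrite lee_fin. Qed.

Lemma FpE A B t x : Fp A B (t, x) =
  if (t \in A) && (x \in B) then (f t x)%:E else 0%E.
Proof. by rewrite /Fp /patch in_setX. Qed.

Lemma innerT (P : measure T R) A B x : B x ->
  (\int[P]_(t in A) (f t x)%:E = \int[P]_t Fp A B (t, x))%E.
Proof.
move=> Bx; rewrite integral_mkcond; apply: eq_integral => t _.
by rewrite FpE /patch (mem_set Bx) andbT.
Qed.

Lemma innerX (mu : measure X R) A B t : A t ->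
  (\int[mu]_(x in B) (f t x)%:E = \int[mu]_x Fp A B (t, x))%E.
Proof.
move=> At; rewrite integral_mkcond; apply: eq_integral => x _.
by rewrite FpE /patch (mem_set At).
Qed.

Lemma swap (P : {sigma_finite_measure set T -> \bar R})
  (mu : {sigma_finite_measure set X -> \bar R}) A B :
  measurable A -> measurable B ->
  (\int[P]_(t in A) \int[mu]_(x in B) (f t x)%:E =
   \int[mu]_(x in B) \int[P]_(t in A) (f t x)%:E)%E.
Proof.
move=> mA mB.
transitivity (\int[P]_t \int[mu]_x Fp A B (t, x))%E.
  rewrite integral_mkcond; apply: eq_integral => t _.
  rewrite /patch; case: ifPn => [/set_mem At|tA]; first exact: innerX.
  rewrite integral0_eq// => x _; rewrite FpE (negbTE tA).
  by [].
rewrite (fubini_tonelli (Fp A B)); [|exact: mFp|exact: Fp0].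
rewrite [RHS]integral_mkcond; apply: eq_integral => x _.
rewrite /patch; case: ifPn => [/set_mem Bx|xB]; first by rewrite -(innerT P A B x Bx).
rewrite integral0_eq// => t _; rewrite FpE (negbTE xB) andbF.
by [].
Qed.

Lemma mG (P : {sigma_finite_measure set T -> \bar R}) A : measurable A ->
  measurable_fun setT (fun x => \int[P]_(t in A) (f t x)%:E)%E.
Proof.
move=> mA.
have -> : (fun x => \int[P]_(t in A) (f t x)%:E)%E = fubini_G P (Fp A setT).
  by apply/funext => x; rewrite /fubini_G (innerT P A setT x I).
apply: measurable_fun_fubini_tonelli_G; [exact: mFp|exact: Fp0].
Qed.

Lemma mF (mu : {sigma_finite_measure set X -> \bar R}) B : measurable B ->
  measurable_fun setT (fun t => \int[mu]_(x in B) (f t x)%:E)%E.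
Proof.
move=> mB.
have -> : (fun t => \int[mu]_(x in B) (f t x)%:E)%E = fubini_F mu (Fp setT B).
  by apply/funext => t; rewrite /fubini_F (innerX mu setT B t I).
apply: measurable_fun_fubini_tonelli_F; [exact: mFp|exact: Fp0].
Qed.

End aux.

Lemma key_ineq (R : realType) (c : R) (a e : \bar R) : 0 < c ->
  (0 <= a)%E -> (0 <= e)%E -> c < fine a / fine (a + e)%E ->
  (e <= (1 - c)%:E * (a + e))%E.
Proof.
move=> c0; case: a => [a| |] //; case: e => [e| |] //= ha he h;
  try by move: h; rewrite ?invr0 ?mulr0 ?mul0r => h; move: (lt_trans h c0); rewrite ltxx.
rewrite lee_fin in ha he.
have [ae0|ae0] := eqVneq (a + e) 0.
  by move: h; rewrite ae0 invr0 mulr0 => h; move: (lt_trans h c0); rewrite ltxx.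
have aep : 0 < a + e by rewrite lt_def ae0 addr_ge0.
rewrite ltr_pdivlMr // in h.
rewrite -EFinD -EFinM lee_fin; nra.
Qed.

Lemma meas_lt (R : realType) (d : measure_display) (X : measurableType d)
  (g h : X -> R) : measurable_fun setT g -> measurable_fun setT h ->
  measurable [set x | g x < h x].
Proof.
move=> mg mh.
have := measurable_fun_ltr mg mh measurableT (Y := [set true]) I.
by rewrite setTI.
Qed.

Theorem corollary1 (R : realType) (d1 d2 : measure_display)
  (T : measurableType d1) (X : measurableType d2)
  (theta : T -> R) (delta c : R)
  (pa pd : probability T R)
  (mu : {sigma_finite_measure set X -> \bar R})
  (f : T -> X -> R) :
  measurable_fun setT theta ->
  0 < c < 1 ->
  (* likelihood: a jointly measurable family of probability densities w.r.t. mu *)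
  measurable_fun setT (fun p : T * X => f p.1 p.2) ->
  (forall t x, 0 <= f t x) ->
  (forall t, (\int[mu]_x (f t x)%:E = 1)%E) ->
  let E := [set t | delta < theta t] in
  let Ebar := [set t | theta t <= delta] in
  (0 < pa E)%E -> (0 < pa Ebar)%E -> (0 < pd E)%E -> (0 < pd Ebar)%E ->
  (forall A, measurable A -> cond_prob pa A E = cond_prob pd A E) ->
  (forall A, measurable A -> cond_prob pa A Ebar = cond_prob pd A Ebar) ->
  (0 < joint_prob pd mu f setT (success_set pa f E c))%E ->
  (fine (pd E) / fine (pd Ebar)) / (fine (pa E) / fine (pa Ebar)) = 1 ->
  PID pa pd mu f E Ebar c <= 1 - c.
Proof.
move=> mth /andP[c0 c1] mf f0 f1 E Ebar paE paEb pdE pdEb hcE hcEb Dpos HR.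
have mE : measurable E.
  have -> : E = theta @^-1` `]delta, +oo[.
    by apply/seteqP; split => t /=; rewrite in_itv /= andbT.
  by rewrite -[X in measurable X]setTI; apply: mth => //; exact: measurable_itv.
have mEb : measurable Ebar.
  have -> : Ebar = theta @^-1` `]-oo, delta].
    by apply/seteqP; split => t /=; rewrite in_itv /=.
  by rewrite -[X in measurable X]setTI; apply: mth => //; exact: measurable_itv.
have UEE : E `|` Ebar = setT.
  apply/seteqP; split => // t _; rewrite /E /Ebar /=.
  by case: (ltP delta (theta t)) => h; [left|right].
have IEE : E `&` Ebar = set0.
  apply/seteqP; split => // t [/= h1 h2].
  by have := lt_le_trans h1 h2; rewrite ltxx.
have finP (P : probability T R) A : measurable A -> P A \is a fin_num.
  by move=> mA; exact: fin_num_measure.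
have sum1 (P : probability T R) : fine (P E) + fine (P Ebar) = 1.
  rewrite -fineD ?finP // -measureU // UEE.
  exact: (congr1 fine (probability_setT P)).
have posP (P : probability T R) A : measurable A -> (0 < P A)%E -> 0 < fine (P A).
  move=> mA PA; apply: fine_gt0; rewrite PA /=.
  by case/fin_numPlt/andP : (finP P A mA).
have eqE : fine (pd E) = fine (pa E).
  have p0 := posP pd E mE pdE; have q0 := posP pd Ebar mEb pdEb.
  have a0 := posP pa E mE paE; have b0 := posP pa Ebar mEb paEb.
  have s1 := sum1 pd; have s2 := sum1 pa.
  move: HR.
  set p := fine (pd E); set q := fine (pd Ebar).
  set a := fine (pa E); set b := fine (pa Ebar) => HR.
  have e1 : p / q = a / b.
    have ab0 : a / b != 0 by rewrite mulf_neq0 ?invr_eq0 ?gt_eqF.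
    by rewrite -(divfK ab0 (p / q)) HR mul1r.
  have qn : q != 0 by rewrite gt_eqF.
  have bn : b != 0 by rewrite gt_eqF.
  move/eqP: e1; rewrite eqr_div // => /eqP e1.
  have hq : q = 1 - p by rewrite -s1 addrC addKr.
  have hb : b = 1 - a by rewrite -s2 addrC addKr.
  rewrite hq hb in e1.
  have : p - a = p * (1 - a) - a * (1 - p) by ring.
  by rewrite e1 subrr => /eqP; rewrite subr_eq0 => /eqP.
have eqEb : fine (pd Ebar) = fine (pa Ebar).
  by apply: (addrI (fine (pd E))); rewrite sum1 eqE sum1.
have hpd A : measurable A -> pd A = pa A.
  move=> mA.
  have e1 : fine (pd (A `&` E)) = fine (pa (A `&` E)).
    move: (hcE A mA); rewrite /cond_prob eqE => h.
    have a0 := posP pa E mE paE.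
    have a0' : fine (pa E) != 0 by rewrite gt_eqF.
    by rewrite -(divfK a0' (fine (pd (A `&` E)))) -h divfK.
  have e2 : fine (pd (A `&` Ebar)) = fine (pa (A `&` Ebar)).
    move: (hcEb A mA); rewrite /cond_prob eqEb => h.
    have a0 := posP pa Ebar mEb paEb.
    have a0' : fine (pa Ebar) != 0 by rewrite gt_eqF.
    by rewrite -(divfK a0' (fine (pd (A `&` Ebar)))) -h divfK.
  have AU : A = (A `&` E) `|` (A `&` Ebar) by rewrite -setIUr UEE setIT.
  have dj : (A `&` E) `&` (A `&` Ebar) = set0 by rewrite setIACA IEE setI0.
  have mAE := measurableI _ _ mA mE; have mAEb := measurableI _ _ mA mEb.
  have h1 : pd (A `&` E) = pa (A `&` E).
    by rewrite -[LHS](fineK (finP pd _ mAE)) -[RHS](fineK (finP pa _ mAE)) e1.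
  have h2 : pd (A `&` Ebar) = pa (A `&` Ebar).
    by rewrite -[LHS](fineK (finP pd _ mAEb)) -[RHS](fineK (finP pa _ mAEb)) e2.
  rewrite AU !measureU //; congr (_ + _)%E; [exact: h1|exact: h2].
set S := success_set pa f E c.
pose h (A : set T) x := (\int[pa]_(t in A) (f t x)%:E)%E.
have mh A : measurable A -> measurable_fun setT (h A).
  by move=> mA; exact: (@mG _ _ _ _ _ _ mf f0 pa _ mA).
have mfh A : measurable A -> measurable_fun setT (fun x => fine (h A x)).
  by move=> mA; apply: measurableT_comp; [exact: fine_measurable|exact: mh].
have h0 A x : (0 <= h A x)%E.
  by apply: integral_ge0 => t _; rewrite lee_fin.
have mS : measurable S.
  have -> : S = [set x | 0 < fine (h setT x)] `&`
                [set x | c * fine (h setT x) < fine (h E x)].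
    apply/seteqP; split => x /=; rewrite /S /success_set /posterior /=.
      move=> hx.
      have b0 : 0 <= fine (h setT x) by apply: fine_ge0.
      have [bz|bn] := eqVneq (fine (h setT x)) 0.
        by move: hx; rewrite /h bz invr0 mulr0 => hx; move: (lt_trans hx c0); rewrite ltxx.
      have bp : 0 < fine (h setT x) by rewrite lt_def bn b0.
      by split => //; rewrite -ltr_pdivlMr.
    by move=> [bp hx]; rewrite ltr_pdivlMr.
  have mT := mfh _ (@measurableT _ T); have mE' := mfh _ mE.
  apply: measurableI; apply: meas_lt => //.
  exact: (measurable_funM (measurable_cst c) mT).
have mft x : measurable_fun setT (fun t => f t x).
  exact: (measurable_fun_pair1 x mf).
have mfx t : measurable_fun setT (fun x => f t x).
  exact: (measurable_fun_pair2 t mf).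
have hpt x : S x -> (h Ebar x <= (1 - c)%:E * h setT x)%E.
  move=> Sx.
  have Sx' : c < fine (h E x) / fine (h setT x) := Sx.
  have hU : h setT x = (h E x + h Ebar x)%E.
    rewrite /h -UEE ge0_integral_setU //.
    - by rewrite UEE; apply/measurable_EFinP; exact: mft.
    - by move=> t _; rewrite lee_fin.
    - by apply/eqP.
  rewrite hU in Sx' *; exact: key_ineq.
have eqj A : measurable A -> joint_prob pd mu f A S = (\int[mu]_(x in S) h A x)%E.
  move=> mA; rewrite /joint_prob (eq_measure_integral (pa : measure _ _)); last first.
    by move=> B mB _; exact: hpd.
  exact: (@swap _ _ _ _ _ _ mf f0 pa mu A S mA mS).
have hNle : (joint_prob pd mu f Ebar S <= (1 - c)%:E * joint_prob pd mu f setT S)%E.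
  rewrite !eqj // -ge0_integralZl //; last 2 first.
  - exact: measurable_funTS (mh _ measurableT).
  - by rewrite lee_fin subr_ge0 ltW.
  apply: ge0_le_integral => //.
  - exact: measurable_funTS (mh _ mEb).
  - by apply: measurable_funeM; exact: measurable_funTS (mh _ measurableT).
have Dle1 : (joint_prob pd mu f setT S <= 1)%E.
  rewrite /joint_prob.
  apply: (@le_trans _ _ (\int[pd]_(t in setT) (\int[mu]_(x in setT) (f t x)%:E))%E).
    apply: ge0_le_integral => //.
    - by move=> t _; apply: integral_ge0 => x _; rewrite lee_fin.
    - exact: (@mF _ _ _ _ _ _ mf f0 mu S mS).
    - exact: (@mF _ _ _ _ _ _ mf f0 mu setT measurableT).
    - move=> t _; apply: ge0_subset_integral => //.
      + by apply/measurable_EFinP; exact: mfx.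
      + by move=> x _; rewrite lee_fin.
  under eq_integral => t _ do rewrite f1.
  rewrite integral_cst // mul1e; exact: probability_le1.
rewrite /PID -/S.
set N := joint_prob pd mu f Ebar S.
set Dn := joint_prob pd mu f setT S.
have N0 : (0 <= N)%E.
  by apply: integral_ge0 => t _; apply: integral_ge0 => x _; rewrite lee_fin.
have Dfin : Dn \is a fin_num.
  by rewrite ge0_fin_numE ?(ltW Dpos) // (le_lt_trans Dle1) // ltry.
have Nfin : N \is a fin_num.
  rewrite ge0_fin_numE //; apply: (le_lt_trans hNle).
  by rewrite -[X in (_ * X)%E](fineK Dfin) -EFinM ltry.
have Dp : 0 < fine Dn by rewrite -lte_fin fineK.
rewrite ler_pdivrMr // -lee_fin EFinM !fineK //.
Qed.
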